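(* Fix integers $L\ge1$, $n_0,\dots,n_L\ge1$, let $\boldsymbol{\mathcal W}=\mathbb{R}^{n_0\times n_1}\times\cdots\times\mathbb{R}^{n_{L-1}\times n_L}$, and for $\mathbf W=(W_1,\dots,W_L)\in\boldsymbol{\mathcal W}$ let $F(\mathbf W,\cdot)=\Lambda_L(W_L,\cdot)\circ\cdots\circ\Lambda_1(W_1,\cdot)\colon\mathbb{R}^{n_0}\to\mathbb{R}^{n_L}$ with $\Lambda_l(W_l,x)=\sigma_l(W_l^\top x+b_l)$, fixed biases $b_l$, each $\sigma_l$ ($l<L$) applying a smooth, monotonically increasing, Lipschitz scalar function entrywise, and $\sigma_L=\mathrm{id}$. Let $\boldsymbol{\mathcal X}\subset\mathbb{R}^{n_0}$ be a compact smooth submanifold (the input space). Then for every rank-deficient $\mathbf W_1\in\boldsymbol{\mathcal W}$ and every $\epsilon>0$ there exists a full-rank $\mathbf W_2\in\boldsymbol{\mathcal W}$ such that $\|F(\mathbf W_2,x)-F(\mathbf W_1,x)\|_\infty\le\epsilon$ for all $x\in\boldsymbol{\mathcal X}$.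
   Context: $\mathbf W=(W_1,\dots,W_L)$ is called full-rank if every matrix $W_l$ has full rank $\min(n_{l-1},n_l)$, and rank-deficient otherwise. $\|\cdot\|_\infty$ is the max-norm on $\mathbb{R}^{n_L}$. The paper assumes throughout that the input space is a compact smooth manifold. *)

(* Defs.v *)
From HB Require Import structures.
From mathcomp Require Import all_boot all_order all_algebra.
From mathcomp Require Import all_classical all_reals all_analysis.
Set Implicit Arguments. Unset Strict Implicit. Unset Printing Implicit Defensive.
Import Order.TTheory GRing.Theory Num.Theory.
Import numFieldNormedType.Exports.
Local Open Scope ring_scope.

(* Layers are indexed 0..L-1 (paper: 1..L). Layer l has weight matrix
   W l : 'M_(n l, n l.+1) and bias b l : 'rV_(n l.+1). Inputs are row
   vectors, so x *m W l is the transpose of W_l^T x. *)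

Fixpoint fwd (R : pzRingType) (n : nat -> nat)
  (W : forall l, 'M[R]_(n l, n l.+1)) (b : forall l, 'rV[R]_(n l.+1))
  (sigma : nat -> R -> R) (k : nat) (x : 'rV[R]_(n 0%N)) : 'rV[R]_(n k) :=
  match k return 'rV[R]_(n k) with
  | 0%N => x
  | k'.+1 => map_mx (sigma k') (fwd W b sigma k' x *m W k' + b k')
  end.

Definition net (R : pzRingType) (n : nat -> nat) (L : nat)
  (W : forall l, 'M[R]_(n l, n l.+1)) (b : forall l, 'rV[R]_(n l.+1))
  (sigma : nat -> R -> R) (x : 'rV[R]_(n 0%N)) : 'rV[R]_(n L) :=
  fwd W b sigma L x.

Definition full_rank (R : fieldType) (n : nat -> nat) (L : nat)
  (W : forall l, 'M[R]_(n l, n l.+1)) : Prop :=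
  forall l, (l < L)%N -> \rank (W l) = minn (n l) (n l.+1).

Definition maxnorm (R : realDomainType) (m : nat) (v : 'rV[R]_m) : R :=
  \big[Num.max/0]_(j < m) `|v ord0 j|.

Definition smooth_fun (R : realType) (f : R -> R) : Prop :=
  forall (k : nat) (x : R), derivable (iter k (@derive1 R R) f) x 1.

Definition nondecr_act (R : realDomainType) (f : R -> R) : Prop :=
  forall x y : R, x <= y -> f x <= f y.

Definition lipschitz_act (R : realDomainType) (f : R -> R) : Prop :=
  exists k : R, forall x y : R, `|f x - f y| <= k * `|x - y|.

(* Main.v *)
Require Import Defs.
From HB Require Import structures.
From mathcomp Require Import all_boot all_order all_algebra.
From mathcomp Require Import all_classical all_reals all_analysis.
From mathcomp Require Import zify ring lra.
Set Implicit Arguments. Unset Strict Implicit. Unset Printing Implicit Defensive.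
Import Order.TTheory GRing.Theory Num.Theory.
Import numFieldNormedType.Exports.
Local Open Scope ring_scope.



Lemma bigmax_seq_ge (R : realDomainType) (I : eqType) (r : seq I) (F : I -> R) j :
  j \in r -> F j <= \big[Num.max/0]_(i <- r) F i.
Proof.
elim: r => [//|a r IH]; rewrite in_cons big_cons => /orP [/eqP -> | /IH H].
  by rewrite le_max lexx.
by rewrite le_max H orbT.
Qed.

Lemma maxnorm_ge (R : realDomainType) m (v : 'rV[R]_m) j : `|v ord0 j| <= maxnorm v.
Proof. rewrite /maxnorm. exact: (@bigmax_seq_ge R _ (index_enum _) (fun j => `|v ord0 j|) j (mem_index_enum _)). Qed.

Lemma maxnorm_ge0 (R : realDomainType) m (v : 'rV[R]_m) : 0 <= maxnorm v.
Proof. by rewrite /maxnorm; elim/big_ind: _ => // x y; rewrite le_max => ->. Qed.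

Lemma maxnorm_le (R : realDomainType) m (v : 'rV[R]_m) c :
  0 <= c -> (forall j, `|v ord0 j| <= c) -> maxnorm v <= c.
Proof. by move=> c0 H; rewrite /maxnorm; elim/big_ind: _ => // x y; rewrite ge_max => -> ->. Qed.

Definition Ssum (R : realDomainType) m n (M : 'M[R]_(m, n)) : R :=
  \sum_i \sum_j `|M i j|.

Lemma Ssum_ge0 (R : realDomainType) m n (M : 'M[R]_(m, n)) : 0 <= Ssum M.
Proof. by apply: sumr_ge0 => i _; apply: sumr_ge0. Qed.

Lemma SsumD (R : realDomainType) m n (A B : 'M[R]_(m, n)) : Ssum (A + B) <= Ssum A + Ssum B.
Proof.
rewrite /Ssum -big_split; apply: ler_sum => i _; rewrite -big_split; apply: ler_sum => j _.
by rewrite mxE ler_normD.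
Qed.

Lemma mulmx_bound (R : realDomainType) m n (v : 'rV[R]_m) (M : 'M[R]_(m, n)) j :
  `|(v *m M) ord0 j| <= maxnorm v * Ssum M.
Proof.
rewrite mxE; apply: le_trans (ler_norm_sum _ _ _) _.
apply: le_trans (_ : \sum_i maxnorm v * `|M i j| <= _).
  apply: ler_sum => i _; rewrite normrM; apply: ler_wpM2r => //; exact: maxnorm_ge.
rewrite -mulr_sumr; apply: ler_wpM2l; first exact: maxnorm_ge0.
apply: ler_sum => i _.
rewrite (bigD1 j) //=; apply: ler_wpDr => //; exact: sumr_ge0.
Qed.

Lemma Ssum_pid (R : realDomainType) m n r (s : R) :
  Ssum (s *: (pid_mx r : 'M[R]_(m, n))) <= `|s| * (m * n)%:R.
Proof.
rewrite /Ssum.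
apply: le_trans (_ : \sum_(i < m) \sum_(j < n) `|s| <= _).
  apply: ler_sum => i _; apply: ler_sum => j _; rewrite !mxE normrM.
  by apply: ler_piMr => //; rewrite normr_nat lern1 leq_b1.
by rewrite big_const_ord big_const_ord !iter_addr_0 -mulrnA mulr_natr mulnC.
Qed.

Lemma fwd_bound (R : realType) L (n : nat -> nat) (W : forall l, 'M[R]_(n l, n l.+1))
  (b : forall l, 'rV[R]_(n l.+1)) (sigma : nat -> R -> R) (X : set 'rV[R]_(n 0%N)) :
  (forall k, (k < L)%N -> exists K, forall x y, `|sigma k x - sigma k y| <= K * `|x - y|) ->
  (exists B0, forall x, X x -> maxnorm x <= B0) ->
  forall k, (k <= L)%N -> exists B, 0 <= B /\ forall x, X x -> maxnorm (fwd W b sigma k x) <= B.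
Proof.
move=> Hl [B0 HB0]; elim=> [_|k IH Hk].
  exists (Num.max B0 0); split; first by rewrite le_max lexx orbT.
  by move=> x Xx; rewrite le_max HB0.
have [B [B0' HB]] := IH (ltnW Hk); have [K HK] := Hl k Hk.
have Sp := Ssum_ge0 (W k); have bp := maxnorm_ge0 (b k).
exists (`|sigma k 0| + `|K| * (B * Ssum (W k) + maxnorm (b k))); split.
  by apply: addr_ge0 => //; apply: mulr_ge0 => //; apply: addr_ge0 => //; apply: mulr_ge0.
move=> x Xx /=; apply: maxnorm_le => [|j].
  by apply: addr_ge0 => //; apply: mulr_ge0 => //; apply: addr_ge0 => //; apply: mulr_ge0.
rewrite mxE; set y := (fwd W b sigma k x *m W k + b k) ord0 j.
have Hy : `|y| <= B * Ssum (W k) + maxnorm (b k).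
  rewrite /y mxE; apply: le_trans (ler_normD _ _) _; apply: lerD; last exact: maxnorm_ge.
  apply: le_trans (mulmx_bound _ _ _) _; apply: ler_wpM2r => //; exact: HB.
have H1 := HK y 0; rewrite subr0 in H1.
have H2 := ler_normD (sigma k y - sigma k 0) (sigma k 0); rewrite subrK in H2.
have H3 : K * `|y| <= `|K| * `|y| by apply: ler_wpM2r => //; exact: ler_norm.
have H4 : `|K| * `|y| <= `|K| * (B * Ssum (W k) + maxnorm (b k)) by apply: ler_wpM2l.
lra.
Qed.

Lemma entry_sub (R : pzRingType) m (u v : 'rV[R]_m) j : (u - v) ord0 j = u ord0 j - v ord0 j.
Proof. by rewrite !mxE. Qed.
Lemma entry_add (R : pzRingType) m (u v : 'rV[R]_m) j : (u + v) ord0 j = u ord0 j + v ord0 j.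
Proof. by rewrite !mxE. Qed.
Lemma entry_map (R : pzRingType) m (f : R -> R) (u : 'rV[R]_m) j : (map_mx f u) ord0 j = f (u ord0 j).
Proof. by rewrite !mxE. Qed.

Lemma fwd_err (R : realType) L (n : nat -> nat) (W1 : forall l, 'M[R]_(n l, n l.+1))
  (b : forall l, 'rV[R]_(n l.+1)) (sigma : nat -> R -> R) (X : set 'rV[R]_(n 0%N)) :
  (forall k, (k < L)%N -> exists K, forall x y, `|sigma k x - sigma k y| <= K * `|x - y|) ->
  (forall k, (k <= L)%N -> exists B, 0 <= B /\ forall x, X x -> maxnorm (fwd W1 b sigma k x) <= B) ->
  forall k, (k <= L)%N -> exists C, 0 <= C /\
    forall (t : R) (W2 : forall l, 'M[R]_(n l, n l.+1)), 0 <= t -> t <= 1 ->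
      (forall l, Ssum (W2 l - W1 l) <= t) ->
      forall x, X x -> maxnorm (fwd W2 b sigma k x - fwd W1 b sigma k x) <= C * t.
Proof.
move=> Hl Hb; elim=> [_|k IH Hk].
  exists 0; split => // t W2 t0 t1 HW x Xx /=; rewrite subrr mul0r.
  by apply: maxnorm_le => // j; rewrite mxE normr0.
have [C [C0 HC]] := IH (ltnW Hk); have [K HK] := Hl k Hk.
have [B [B0 HB]] := Hb k (ltnW Hk).
set S := Ssum (W1 k); have Sp : 0 <= S := Ssum_ge0 (W1 k).
exists (`|K| * (C * (S + 1) + B)); split.
  by apply: mulr_ge0 => //; apply: addr_ge0 => //; apply: mulr_ge0 => //; apply: addr_ge0.
move=> t W2 t0 t1 HW x Xx /=.
apply: maxnorm_le => [|j].
  by apply: mulr_ge0 => //; apply: mulr_ge0 => //; apply: addr_ge0 => //; apply: mulr_ge0 => //; apply: addr_ge0.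
rewrite entry_sub !entry_map.
set f2 := fwd W2 b sigma k x; set f1 := fwd W1 b sigma k x.
have E : (f2 *m W2 k + b k) ord0 j - (f1 *m W1 k + b k) ord0 j =
   ((f2 - f1) *m W2 k) ord0 j + (f1 *m (W2 k - W1 k)) ord0 j.
  rewrite mulmxBl mulmxBr !entry_sub !entry_add; lra.
have HS2 : Ssum (W2 k) <= S + 1.
  have := SsumD (W1 k) (W2 k - W1 k); rewrite [W1 k + _]addrC subrK.
  have := HW k; rewrite -/S; lra.
have P1 : `|((f2 - f1) *m W2 k) ord0 j| <= (C * t) * (S + 1).
  apply: le_trans (mulmx_bound _ _ _) _; apply: ler_pM => //.
  - exact: maxnorm_ge0.
  - exact: Ssum_ge0.
  - exact: HC.
have P2 : `|(f1 *m (W2 k - W1 k)) ord0 j| <= B * t.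
  apply: le_trans (mulmx_bound _ _ _) _; apply: ler_pM => //.
  - exact: maxnorm_ge0.
  - exact: Ssum_ge0.
  - exact: HB.
have H5 : `|(f2 *m W2 k + b k) ord0 j - (f1 *m W1 k + b k) ord0 j| <= (C * (S + 1) + B) * t.
  rewrite E; apply: le_trans (ler_normD _ _) _.
  have -> : (C * (S + 1) + B) * t = (C * t) * (S + 1) + B * t by ring.
  exact: lerD.
apply: le_trans (HK _ _) _.
rewrite -mulrA; apply: le_trans (_ : `|K| * `|(f2 *m W2 k + b k) ord0 j - (f1 *m W1 k + b k) ord0 j| <= _).
  by apply: ler_wpM2r => //; exact: ler_norm.
by apply: ler_wpM2l.
Qed.

Lemma compact_maxnorm (R : realType) m (X : set 'rV[R]_m) :
  compact X -> exists B0, forall x, X x -> maxnorm x <= B0.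
Proof.
move=> /compact_bounded [M [Mr HM]].
have H : M < `|M| + 1 by have := real_ler_norm Mr; lra.
exists (`|M| + 1) => x Xx; have Hx := HM _ H x Xx.
apply: le_trans Hx; apply: maxnorm_le => // j.
have -> : `|x| = mx_norm x by [].
rewrite mx_normrE.
exact: (@bigmax_seq_ge R _ (index_enum _) (fun ij => `|x ij.1 ij.2|) (ord0, j) (mem_index_enum _)).
Qed.

Lemma char_eval (F : fieldType) n (A : 'M[F]_n) a :
  (char_poly A).[a] = \det (a%:M - A).
Proof.
rewrite /char_poly /determinant horner_sum; apply: eq_bigr => s _.
rewrite hornerM horner_exp !hornerE; congr (_ * _).
rewrite (big_morph _ (fun p q => hornerM p q a) (hornerC 1 a)).
by apply: eq_bigr => i _; rewrite !mxE !(hornerE, hornerMn).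
Qed.

Lemma exists_nonroot (R : realFieldType) (p : {poly R}) c :
  p != 0 -> 0 < c -> exists s, (0 < s <= c) /\ ~~ root p s.
Proof.
move=> p0 c0.
pose rs := [seq c / (k.+1)%:R | k <- iota 0 (size p)].
have urs : uniq rs.
  rewrite map_inj_uniq ?iota_uniq // => a b /(mulfI (lt0r_neq0 c0)) /invr_inj /eqP.
  by rewrite eqr_nat => /eqP [] .
have : ~~ all (root p) rs.
  apply/negP => H; have := max_poly_roots p0 H urs.
  by rewrite size_map size_iota ltnn.
rewrite -has_predC => /hasP [s /mapP [k _ ->] /= H]; exists (c / (k.+1)%:R); split => //.
rewrite divr_gt0 ?ltr0Sn //=.
by rewrite ler_pdivrMr ?ltr0Sn // ler_pMr // ler1n.
Qed.

Definition Ablk (F : fieldType) m n (W : 'M[F]_(m,n)) : 'M[F]_(minn m n) :=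
  (pid_mx (minn m n) : 'M[F]_(minn m n, m)) *m W *m (pid_mx (minn m n) : 'M[F]_(n, minn m n)).

Lemma rank_pert (F : fieldType) m n (W : 'M[F]_(m,n)) s :
  ~~ root (char_poly (- Ablk W)) s ->
  \rank (W + s *: pid_mx (minn m n))%R = minn m n.
Proof.
set r := minn m n; rewrite /Ablk; set A := (_ *m W *m _) => Hs.
apply/eqP; rewrite eqn_leq leq_min rank_leq_row rank_leq_col /=.
have Hr : \rank ((pid_mx r : 'M[F]_(r, m)) *m (W + s *: pid_mx r)%R *m (pid_mx r : 'M[F]_(n, r))) = r.
  rewrite mulmxDr mulmxDl -/A -scalemxAr -scalemxAl !mul_pid_mx.
  have -> : minn n (minn (minn m (minn r r)) r) = r by rewrite /r; lia.
  rewrite pid_mx_1 scalemx1 mxrank_unit // unitmxE unitfE.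
  by rewrite -[A]opprK addrC -char_eval.
rewrite -{1}Hr; exact: leq_trans (mxrankM_maxl _ _) (mxrankM_maxr _ _).
Qed.

Theorem proposition1 (R : realType) (L : nat) (n : nat -> nat)
  (b : forall l, 'rV[R]_(n l.+1)) (sigma : nat -> R -> R)
  (X : set 'rV[R]_(n 0%N)) :
  (1 <= L)%N ->
  (forall l, (l <= L)%N -> (1 <= n l)%N) ->
  (forall l, (l < L.-1)%N ->
     smooth_fun (sigma l) /\ nondecr_act (sigma l) /\ lipschitz_act (sigma l)) ->
  sigma L.-1 = id ->
  compact X ->
  forall (W1 : forall l, 'M[R]_(n l, n l.+1)),
    ~ full_rank L W1 ->
    forall eps : R, 0 < eps ->
      exists W2 : forall l, 'M[R]_(n l, n l.+1),
        full_rank L W2 /\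
        forall x, X x ->
          maxnorm (net L W2 b sigma x - net L W1 b sigma x) <= eps.
Proof.
move=> L1 Hn Hsig HsL cX W1 Hnf eps e0.
have Hl : forall k, (k < L)%N -> exists K, forall x y, `|sigma k x - sigma k y| <= K * `|x - y|.
  move=> k kL; case: (ltnP k L.-1) => Hk.
    by have [_ [_ [K HK]]] := Hsig k Hk; exists K.
  have -> : k = L.-1 by lia.
  by rewrite HsL; exists 1 => x y; rewrite mul1r.
have Hb := fwd_bound W1 b Hl (compact_maxnorm cX).
have [C [C0 HC]] := fwd_err Hl Hb (leqnn L).
set delta := Num.min 1 (eps / (C + 1)).
have C1 : 0 < C + 1 by lra.
have d0 : 0 < delta by rewrite lt_min ltr01 divr_gt0.
have d1 : delta <= 1 by rewrite ge_min lexx.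
have d2 : delta <= eps / (C + 1) by rewrite ge_min lexx orbT.
have Hs : forall l, exists s : R,
    (0 < s <= delta / ((n l * n l.+1)%:R + 1)) /\
    ~~ root (char_poly (- Ablk (W1 l))) s.
  move=> l; apply: exists_nonroot; first exact: monic_neq0 (char_poly_monic _).
  by apply: divr_gt0 => //; apply: ltr_wpDl => //.
have [s Hs'] := choice Hs.
exists (fun l => W1 l + s l *: pid_mx (minn (n l) (n l.+1))); split.
  by move=> l _; apply: rank_pert; exact: (Hs' l).2.
move=> x Xx; rewrite /net.
apply: le_trans (HC delta _ (ltW d0) d1 _ x Xx) _.
  move=> l; rewrite addrAC subrr add0r.
  apply: le_trans (@Ssum_pid R (n l) (n l.+1) (minn (n l) (n l.+1)) (s l)) _.
  have /andP [s0 sle] := (Hs' l).1.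
  have k0 : 0 < (n l * n l.+1)%:R + 1 :> R by apply: ltr_wpDl.
  rewrite ler_pdivlMr // mulrDr mulr1 in sle.
  rewrite gtr0_norm //; lra.
rewrite ler_pdivlMr // mulrDr mulr1 in d2.
lra.
Qed.
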